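(* Let $C>0$, $p\in(0,1]$ and $\epsilon\in(0,1)$, and let $$\tau(\epsilon) := 1+\ln(1/\epsilon)+\sqrt{\ln^2(1/\epsilon)+2\ln(1/\epsilon)}.$$ Let $S$ be a finite set of elements, each $i\in S$ having a weight $w_i$ with $0\le w_i\le C$, such that $$\sum_{i\in S} w_i \ \ge\ \frac{\tau(\epsilon)}{p}\cdot C.$$ Suppose each element of $S$ is active independently with probability $p$. Then, with probability at least $1-\epsilon$, the total weight of the active elements of $S$ is at least $C$.
   Context: This is used in a knapsack setting with capacity $C$, where it is a standing assumption of the paper that every individual item fits in the knapsack, i.e. $w_i\le C$ for every item. *)

(* Defs.v *)
From HB Require Import structures.
From mathcomp Require Import all_boot all_order all_algebra.
From mathcomp Require Import reals exp.
Set Implicit Arguments. Unset Strict Implicit. Unset Printing Implicit Defensive.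
Import Order.TTheory GRing.Theory Num.Theory.
Local Open Scope ring_scope.

Definition tau (R : realType) (eps : R) : R :=
  1 + ln (eps^-1) + Num.sqrt (ln (eps^-1) ^+ 2 + 2 * ln (eps^-1)).

(* Each element of S = 'I_n is active independently with probability p:
   the set A of active elements has probability p^|A| (1-p)^(n-|A|). *)
Definition prob_active_weight_ge (R : realType) (n : nat) (p : R)
    (w : 'I_n -> R) (C : R) : R :=
  \sum_(A : {set 'I_n} | C <= \sum_(i in A) w i)
     p ^+ #|A| * (1 - p) ^+ (n - #|A|).

(* Main.v *)
Require Import Defs.
From HB Require Import structures.
From mathcomp Require Import all_boot all_order all_algebra.
From mathcomp Require Import all_classical all_reals all_analysis.
From mathcomp Require Import zify ring lra.
Import Order.TTheory GRing.Theory Num.Theory.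
Import numFieldNormedType.Exports.
Local Open Scope ring_scope.

Lemma expand (R : realType) n (f g : 'I_n -> R) :
  \prod_i (f i + g i) = \sum_(A : {set 'I_n}) (\prod_(i in A) f i * \prod_(i in ~: A) g i).
Proof.
rewrite bigA_distr; apply: eq_bigr => A _.
rewrite (bigID (mem A)) /=; congr (_ * _).
- by apply: eq_bigr => i ->.
- by apply: eq_big => [i|i]; rewrite ?inE // => /negbTE ->.
Qed.

Lemma PE (R : realType) n (p : R) (A : {set 'I_n}) :
  p ^+ #|A| * (1 - p) ^+ (n - #|A|) = \prod_(i in A) p * \prod_(i in ~: A) (1 - p).
Proof.
rewrite !prodr_const; congr (_ * _ ^+ _).
have := cardsC A; rewrite card_ord; lia.
Qed.
Lemma expR_ge2 (R : realType) (x : R) : 0 <= x -> 1 + x + x ^+ 2 / 2 <= expR x.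
Proof.
move=> x_ge0; rewrite /expR.
pose f (i : nat) : R := (i == 0)%:R + x *+ (i == 1) + x ^+ 2 / 2 *+ (i == 2).
have F m : (2 < m)%N -> \sum_(0 <= i < m) f i = 1 + x + x ^+ 2 / 2.
  move=> n1m.
  rewrite (@big_cat_nat _ _ _ 3)//= !big_nat_recl//= big_geq// addr0.
  rewrite big_nat_cond big1 ?addr0; last first.
    by move=> i /andP[/andP[ni _] _]; rewrite /f/= !gtn_eqF// ?(ltn_trans _ ni)// !mulr0n !addr0.
  by rewrite /f/= !mulr0n !mulr1n !addr0 !add0r addrA.
rewrite [leLHS](_ : _ = limn (series f)); last first.
  by apply/esym/(@lim_near_cst R^o) => //; near=> k; apply: F; near: k.
apply: ler_lim; first by apply: is_cvg_near_cst; near=> k; apply: F; near: k.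
  exact: is_cvg_series_exp_coeff.
near=> k; apply: ler_sum => -[|[|[|i]]] _; rewrite /f /exp_coeff/=.
- by rewrite !(mulr0n, expr0, addr0, divr1).
- by rewrite !(mulr0n, mulr1n, expr1, addr0, add0r, divr1).
- by rewrite !(mulr0n, mulr1n, addr0, add0r).
- by rewrite !(mulr0n, addr0) divr_ge0// exprn_ge0.
Unshelve. all: by end_near. Qed.

Lemma expN_le (R : realType) (y : R) : 0 <= y -> expR (- y) <= 1 - y + y ^+ 2 / 2.
Proof.
move=> y0; have h := @expR_ge2 R y y0.
have a0 : 0 < 1 + y + y ^+ 2 / 2 by nra.
rewrite expRN; apply: le_trans (_ : _ <= (1 + y + y ^+ 2 / 2)^-1) _.
  by rewrite lef_pV2 ?posrE ?expR_gt0.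
have hm := mulfV (lt0r_neq0 a0).
have i0 : 0 < (1 + y + y ^+ 2 / 2)^-1 by rewrite invr_gt0.
set b := (1 + y + y ^+ 2 / 2)^-1 in hm i0 *.
set a := (1 + y + y ^+ 2 / 2) in hm a0 h.
have e : a * (1 - y + y ^+ 2 / 2) = 1 + y ^+ 4 / 4 by rewrite /a; field.
have : 0 <= y ^+ 4 by rewrite exprn_ge0.
nra.
Qed.

Theorem lemma1 (R : realType) (n : nat) (C p eps : R) (w : 'I_n -> R) :
  0 < C -> 0 < p <= 1 -> 0 < eps < 1 ->
  (forall i, 0 <= w i <= C) ->
  tau eps / p * C <= \sum_(i < n) w i ->
  1 - eps <= prob_active_weight_ge p w C.
Proof.
move=> C0 /andP[p0 p1] /andP[e0 e1] hw htau.
pose v i := w i / C.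
have hv i : 0 <= v i <= 1.
  have /andP[a b] := hw i.
  by rewrite /v divr_ge0 ?(ltW C0) //= ler_pdivrMr // mul1r.
have hX (A : {set 'I_n}) : (C <= \sum_(i in A) w i) = (1 <= \sum_(i in A) v i).
  by rewrite /v -mulr_suml ler_pdivlMr // mul1r.
pose P (A : {set 'I_n}) := p ^+ #|A| * (1 - p) ^+ (n - #|A|).
have P0 A : 0 <= P A by apply: mulr_ge0; apply: exprn_ge0; [exact: ltW | by rewrite subr_ge0].
have sum1 : \sum_(A : {set 'I_n}) P A = 1.
  rewrite /P; under eq_bigr do rewrite PE.
  by rewrite -expand; apply: big1 => i _; ring.
pose L := ln (eps^-1).
have L0 : 0 <= L by apply: ln_ge0; rewrite invf_ge1 // ltW.
have eL : expR (- L) = eps.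
  by rewrite /L lnV ?posrE // opprK lnK ?posrE.
pose mu := p * \sum_i v i.
have hmu : tau eps <= mu.
  rewrite /mu /v -mulr_suml.
  by rewrite -ler_pdivrMl // ler_pdivlMr // [p^-1 * _]mulrC.
pose s := Num.sqrt (L ^+ 2 + 2 * L).
have s0 : 0 <= s by rewrite sqrtr_ge0.
have s2 : s ^+ 2 = L ^+ 2 + 2 * L by rewrite sqr_sqrtr //; nra.
have htau' : tau eps = 1 + L + s by [].
have hmu2 : 1 + L + s <= mu by rewrite -htau'.
have mu1 : 1 <= mu by lra.
have key : 2 * mu * L <= (mu - 1) ^+ 2.
  have h1 : s ^+ 2 <= (mu - 1 - L) ^+ 2 by rewrite ler_sqr ?nnegrE; lra.
  nra.
pose t := 1 - mu^-1.
have tmu : t * mu = mu - 1 by rewrite /t mulrBl mul1r mulVf // gt_eqF // (lt_le_trans ltr01).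
have t0 : 0 <= t by rewrite /t subr_ge0 invf_le1 // (lt_le_trans ltr01).
pose X (A : {set 'I_n}) := \sum_(i in A) v i.
have hprob : prob_active_weight_ge p w C = 1 - \sum_(A | ~~ (1 <= X A)) P A.
  apply: (addIr (\sum_(A | ~~ (1 <= X A)) P A)); rewrite subrK.
  rewrite (bigID (fun A => 1 <= X A)) /= in sum1; rewrite -[RHS]sum1; congr (_ + _).
  by apply: eq_bigl => A; rewrite hX.
rewrite hprob lerD2l lerN2.
pose c := t - t ^+ 2 / 2.
have step1 : \sum_(A | ~~ (1 <= X A)) P A <=
    \sum_A P A * expR (t * (1 - X A)).
  apply: le_trans (_ : _ <= \sum_(A | ~~ (1 <= X A)) P A * expR (t * (1 - X A))) _.
    apply: ler_sum => A hA; rewrite -{1}(mulr1 (P A)) ler_wpM2l //.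
    have hx : X A < 1 by rewrite ltNge.
    apply: le_trans (expR_ge1Dx _); rewrite lerDl mulr_ge0 // subr_ge0 ltW //.
  rewrite big_mkcond /=; apply: ler_sum => A _; case: ifP => _ //.
  by rewrite mulr_ge0 // expR_ge0.
have step2 : \sum_A P A * expR (t * (1 - X A)) =
    expR t * \prod_i (p * expR (- t * v i) + (1 - p)).
  rewrite expand mulr_sumr; apply: eq_bigr => A _.
  rewrite /P PE mulrBr mulr1 expRD -mulNr /X mulr_sumr expR_sum big_split /=.
  ring.
have step3 : \prod_i (p * expR (- t * v i) + (1 - p)) <= expR (- (mu * c)).
  apply: le_trans (_ : _ <= \prod_i expR (- (p * v i * c))) _.
    apply: ler_prod => i _; apply/andP; split.
      by rewrite addr_ge0 ?subr_ge0 // mulr_ge0 ?expR_ge0 // ltW.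
    have /andP[v0 v1] := hv i.
    have y0 : 0 <= t * v i by rewrite mulr_ge0.
    have he := @expN_le R (t * v i) y0.
    rewrite mulNr.
    apply: le_trans (_ : _ <= 1 + (- (p * v i * c))) _; last exact: expR_ge1Dx.
    have h2 : (t * v i) ^+ 2 <= t ^+ 2 * v i.
      by rewrite exprMn ler_wpM2l ?sqr_ge0 // expr2 ler_piMr.
    have h3 := ler_wpM2l (ltW p0) he.
    rewrite /c; nra.
  rewrite -expR_sum ler_expR sumrN lerN2 le_eqVlt; apply/orP; left; apply/eqP.
  by rewrite -mulr_suml -mulr_sumr.
have step4 : expR t * expR (- (mu * c)) <= eps.
  rewrite -expRD -eL ler_expR.
  have ht : t = (mu - 1) / mu by rewrite -tmu mulfK // gt_eqF // (lt_le_trans ltr01).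
  have hmc : mu * (t - mu * c) = - ((mu - 1) ^+ 2 / 2).
    rewrite /c ht; field; rewrite gt_eqF // (lt_le_trans ltr01) //.
  have mu0 : 0 < mu by rewrite (lt_le_trans ltr01).
  nra.
apply: (le_trans step1); rewrite step2.
apply: le_trans step4; rewrite ler_wpM2l ?expR_ge0 //.
Qed.
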